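(* Every Guvab $(G,u,v,\alpha,\beta)$ satisfies exactly one of the following four conditions: (1) $\lim_{k\to\infty}W_k=1$ and $\beta<1$; (2) $\lim_{k\to\infty}W_k=\frac12$ and $\beta<1$; (3) $\lim_{k\to\infty}W_k=0$ and $\beta<1$; (4) $\beta=1$.
   Context: A Guvab is a tuple $(G,u,v,\alpha,\beta)$ where $G$ is a finite, connected, simple graph, $u,v\in V(G)$, and $\alpha,\beta\in[0,1]$ with $\alpha\le\beta$. A random walk on $G$ with starting vertex $w$ and laziness $\gamma$ is the Markov chain $R_0=w$ and, for $i\ge1$, $R_i=R_{i-1}$ with probability $\gamma$ and $R_i=t$ with probability $\frac{1-\gamma}{\deg(R_{i-1})}$ for each neighbor $t$ of $R_{i-1}$. $\mu_k$ is the distribution after $k$ steps of the walk from $u$ with laziness $\alpha$, $\nu_k$ that of the walk from $v$ with laziness $\beta$, and $W_k=W(\mu_k,\nu_k)$ is the Wasserstein ($L^1$ optimal transport) distance with respect to the graph distance: the minimum over transportation plans (nonnegative $T$ on $V(G)\times V(G)$ with marginals $\mu_k,\nu_k$) of $\sum d(w_1,w_2)T(w_1,w_2)$. (Implicit in the statement: when $\beta<1$ the limit $\lim_k W_k$ exists.) *)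

(* Defs.v *)
From HB Require Import structures.
From mathcomp Require Import all_boot all_order all_algebra.
From mathcomp Require Import all_classical all_reals all_analysis.
Set Implicit Arguments. Unset Strict Implicit. Unset Printing Implicit Defensive.
Import Order.TTheory GRing.Theory Num.Theory.
Local Open Scope ring_scope.
Local Open Scope classical_set_scope.

(* A finite simple graph is a finType T with a symmetric irreflexive
   edge relation e : rel T. *)

Definition nbrs (T : finType) (e : rel T) (x : T) : {set T} := [set y | e x y].
Definition deg (T : finType) (e : rel T) (x : T) : nat := #|nbrs e x|.

(* One-step transition probability of the walk with laziness g:
   stay with probability g, move to each neighbour with probability
   (1-g)/deg x.  (An isolated vertex -- only possible in the one-vertex
   connected graph -- keeps all its mass.) *)
Definition step_prob (R : realType) (T : finType) (e : rel T) (g : R) (x y : T) : R :=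
  if x == y then (if deg e x == 0%N then 1 else g)
  else if e x y then (1 - g) / (deg e x)%:R else 0.

Fixpoint walk_dist (R : realType) (T : finType) (e : rel T) (g : R) (w : T)
    (k : nat) : T -> R :=
  match k with
  | 0%N => fun y => (y == w)%:R
  | k'.+1 => fun y => \sum_(x : T) walk_dist e g w k' x * step_prob e g x y
  end.

Fixpoint ball (T : finType) (e : rel T) (n : nat) (x : T) : {set T} :=
  match n with
  | 0%N => [set x]
  | n'.+1 => ball e n' x :|: \bigcup_(z in ball e n' x) nbrs e z
  end.

(* Graph distance: least n with y in ball e n x (distances in a connected
   graph are < #|T|). *)
Definition gdist (T : finType) (e : rel T) (x y : T) : nat :=
  find (fun n => y \in ball e n x) (iota 0 #|T|).

Definition is_plan (R : realType) (T : finType) (mu nu : T -> R) (p : T -> T -> R) : Prop :=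
  [/\ forall a b, 0 <= p a b,
      forall a, \sum_(b : T) p a b = mu a &
      forall b, \sum_(a : T) p a b = nu b].

Definition plan_cost (R : realType) (T : finType) (e : rel T) (p : T -> T -> R) : R :=
  \sum_(a : T) \sum_(b : T) (gdist e a b)%:R * p a b.

Definition wasserstein (R : realType) (T : finType) (e : rel T) (mu nu : T -> R) : R :=
  inf [set c | exists p, is_plan mu nu p /\ c = plan_cost e p].

Definition Wk (R : realType) (T : finType) (e : rel T) (u v : T) (alpha beta : R)
    (k : nat) : R :=
  wasserstein e (walk_dist e alpha u k) (walk_dist e beta v k).

(* Main.v *)
Require Import Defs.
From HB Require Import structures.
From mathcomp Require Import all_boot all_order all_algebra.
From mathcomp Require Import all_classical all_reals all_analysis.
From mathcomp Require Import zify ring lra.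
Import Order.TTheory GRing.Theory Num.Theory numFieldNormedType.Exports.
Local Open Scope classical_set_scope.
Local Open Scope ring_scope.
Set Implicit Arguments. Unset Strict Implicit. Unset Printing Implicit Defensive.

Section Walk.
Variables (R : realType) (T : finType) (e : rel T).
Hypothesis e_irr : irreflexive e.

Lemma step_ge0 (g : R) x y : 0 <= g -> g <= 1 -> 0 <= step_prob e g x y.
Proof.
move=> g0 g1; rewrite /step_prob; case: (x == y); first by case: ifP.
case: (e x y) => //; apply: divr_ge0; rewrite ?subr_ge0 //.
Qed.

Lemma step_sum (g : R) x : \sum_y step_prob e g x y = 1.
Proof.
rewrite (bigD1 x) //= /step_prob eqxx.
rewrite (eq_bigr (fun y => if e x y then (1 - g) / (deg e x)%:R else 0)); last first.
  by move=> y; rewrite eq_sym => /negPf ->.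
rewrite -big_mkcondr /=.
rewrite (eq_bigl (fun y => y \in nbrs e x)); last first.
  move=> y; rewrite /nbrs inE; case exy: (e x y); rewrite ?andbF ?andbT //.
  by apply/negP => /eqP eyx; move: exy; rewrite eyx e_irr.
rewrite sumr_const -/(deg e x); case: eqP => [->|/eqP d0].
  by rewrite mulr0n addr0.
rewrite /deg in d0 *; by rewrite -[(_ / _) *+ _]mulr_natr divfK ?pnatr_eq0 // addrC subrK.
Qed.

Lemma wd_ge0 (g : R) w k y : 0 <= g -> g <= 1 -> 0 <= walk_dist e g w k y.
Proof.
move=> g0 g1; elim: k y => [|k IH] y /=; first by rewrite ler0n.
by apply: sumr_ge0 => x _; apply: mulr_ge0 => //; apply: step_ge0.
Qed.

Lemma wd_sum (g : R) w k : \sum_y walk_dist e g w k y = 1.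
Proof.
elim: k => [|k IH] /=.
  rewrite (bigD1 w) //= eqxx big1 ?addr0 // => y /negPf -> //.
rewrite exchange_big /= -IH; apply: eq_bigr => x _.
by rewrite -mulr_sumr step_sum mulr1.
Qed.

Definition evolve (g : R) (s : nat -> T -> R) :=
  forall k y, s k.+1 y = \sum_x s k x * step_prob e g x y.

Lemma wd_evolve g w : evolve g (walk_dist e g w).
Proof. by []. Qed.

Lemma evolveB g s1 s2 : evolve g s1 -> evolve g s2 ->
  evolve g (fun k x => s1 k x - s2 k x).
Proof.
move=> h1 h2 k y; rewrite h1 h2 -sumrB; apply: eq_bigr => x _; by rewrite mulrBl.
Qed.

Lemma sum_delta (f : T -> R) y : \sum_x f x * (y == x)%:R = f y.
Proof.
rewrite (bigD1 y) //= eqxx mulr1 big1 ?addr0 // => x.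
by rewrite eq_sym => /negPf ->; rewrite mulr0.
Qed.

Lemma CK g s : evolve g s -> forall k K y,
  s (k + K)%N y = \sum_x s k x * walk_dist e g x K y.
Proof.
move=> hs k K; elim: K => [|K IH] y; first by rewrite addn0 /= sum_delta.
rewrite addnS hs /=.
under eq_bigr => z _ do rewrite IH mulr_suml.
rewrite exchange_big /=; apply: eq_bigr => x _; rewrite mulr_sumr.
by apply: eq_bigr => z _; rewrite mulrA.
Qed.

Lemma nonexp (Q : T -> T -> R) (f : T -> R) :
  (forall x y, 0 <= Q x y) -> (forall x, \sum_y Q x y = 1) ->
  \sum_y `| \sum_x f x * Q x y | <= \sum_x `|f x|.
Proof.
move=> hQ hs.
apply: (le_trans (y := \sum_y \sum_x `|f x| * Q x y)).
  apply: ler_sum => y _; apply: (le_trans (ler_norm_sum _ _ _)).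
  by apply: ler_sum => x _; rewrite normrM (ger0_norm (hQ _ _)).
rewrite exchange_big /=; apply: ler_sum => x _.
by rewrite -mulr_sumr hs mulr1.
Qed.

Lemma doeblin (Q : T -> T -> R) (C : pred T) (h f : T -> R) (d : R) :
  (forall x y, 0 <= Q x y) -> (forall x, \sum_y Q x y = 1) ->
  \sum_y h y = 1 ->
  (forall x y, C x -> d * h y <= Q x y) ->
  (forall x, ~~ C x -> f x = 0) -> \sum_x f x = 0 ->
  \sum_y `| \sum_x f x * Q x y | <= (1 - d) * \sum_x `|f x|.
Proof.
move=> hQ hs hh hmin hC hf0.
have E y : \sum_x f x * Q x y = \sum_x f x * (Q x y - d * h y).
  under [RHS]eq_bigr => x _ do rewrite mulrBr.
  by rewrite sumrB -mulr_suml hf0 mul0r subr0.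
apply: (le_trans (y := \sum_y \sum_x `|f x| * (Q x y - d * h y))).
  apply: ler_sum => y _; rewrite E; apply: (le_trans (ler_norm_sum _ _ _)).
  apply: ler_sum => x _; rewrite normrM; case: (boolP (C x)) => Cx.
    by rewrite (ger0_norm (x := Q x y - _)) // subr_ge0 hmin.
  by rewrite hC // normr0 !mul0r.
rewrite exchange_big /= mulr_sumr; apply: ler_sum => x _.
by rewrite -mulr_sumr sumrB hs -mulr_sumr hh mulr1 mulrC.
Qed.

End Walk.

Section Conv.
Variables (R : realType) (T : finType) (e : rel T).
Hypothesis e_irr : irreflexive e.

Lemma geom_small (r c eps : R) : 0 <= r -> r < 1 -> 0 <= c -> 0 < eps ->
  exists j : nat, r ^+ j * c <= eps.
Proof.
move=> r0 r1 c0 e0.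
have hr : `|r| < 1 by rewrite ger0_norm.
have e'0 : 0 < eps / (c + 1) by rewrite divr_gt0 // ltr_wpDl.
case: (cvgr0_norm_le _ (cvg_expr hr) _ e'0) => j _ Hj.
exists j; have := Hj j (leqnn j) => /=; rewrite ger0_norm ?exprn_ge0 // => hj.
apply: (le_trans (ler_wpM2r c0 hj)).
rewrite mulrAC ler_pdivrMr ?ltr_wpDl // ler_wpM2l ?ltW // ?ltrDl ?lerDl //.
Qed.

Lemma conv_gen (g : R) (s m : nat -> T -> R) (K : nat) (d : R) (C : nat -> pred T) :
  0 <= g -> g <= 1 -> evolve e g s -> evolve e g m ->
  (forall k, \sum_x s k x = \sum_x m k x) ->
  (forall k x, ~~ C k x -> s k x = m k x) ->
  0 < d -> d <= 1 ->
  (forall k, exists h : T -> R, \sum_y h y = 1 /\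
      forall x y, C k x -> d * h y <= walk_dist e g x K y) ->
  forall eps, 0 < eps -> exists N, forall k, (N <= k)%N ->
     \sum_x `|s k x - m k x| <= eps.
Proof.
move=> g0 g1 hs hm hsum hC d0 d1 hmin eps eps0.
pose f := fun k x => s k x - m k x.
have ef : evolve e g f := evolveB hs hm.
pose D := fun k => \sum_x `|f k x|.
have D1 k : D k.+1 <= D k.
  rewrite /D; under eq_bigr => y _ do rewrite ef.
  apply: nonexp => [x y|x]; [exact: step_ge0 | exact: step_sum].
have Dmono n k : (n <= k)%N -> D k <= D n.
  move=> /subnK <-; elim: (k - n)%N => [|i IH]; rewrite ?add0n // addSn.
  exact: le_trans (D1 _) IH.
have DK k : D (k + K)%N <= (1 - d) * D k.
  rewrite /D; under eq_bigr => y _ do rewrite (CK ef).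
  have [h [hh hm']] := hmin k.
  apply: (doeblin (C := C k) (h := h)) => //.
  - by move=> x y; apply: wd_ge0.
  - by move=> x; apply: wd_sum.
  - by move=> x /hC; rewrite /f => ->; rewrite subrr.
  - by rewrite /f sumrB hsum subrr.
have Dj j : D (j * K)%N <= (1 - d) ^+ j * D 0%N.
  elim: j => [|j IH]; first by rewrite mul0n expr0 mul1r.
  rewrite mulSn addnC; apply: (le_trans (DK _)).
  by rewrite exprS -mulrA ler_wpM2l // subr_ge0.
have [j hj] : exists j : nat, (1 - d) ^+ j * D 0%N <= eps.
  apply: geom_small => //; rewrite ?subr_ge0 ?ltrBlDr ?ltrDl //.
  by apply: sumr_ge0 => x _.
exists (j * K)%N => k hk.
exact: le_trans (Dmono _ _ hk) (le_trans (Dj j) hj).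
Qed.

End Conv.

Section Reach.
Variables (T : finType) (e : rel T).
Hypothesis e_sym : symmetric e.
Hypothesis e_irr : irreflexive e.

Fixpoint reach (k : nat) (x y : T) : bool :=
  match k with
  | 0%N => x == y
  | k'.+1 => [exists z, reach k' x z && e z y]
  end.

Lemma reach_add j k x y :
  reach (j + k) x y = [exists z, reach j x z && reach k z y].
Proof.
elim: k y => [|k IH] y.
  rewrite addn0 /=; apply/idP/existsP => [h|[z /andP[h /eqP <-]]] //.
  by exists y; rewrite h eqxx.
rewrite addnS /=; apply/existsP/existsP.
  case=> z /andP[hz ezy]; rewrite IH in hz; case/existsP: hz => w /andP[hw hwz].
  by exists w; rewrite hw /=; apply/existsP; exists z; rewrite hwz ezy.
case=> w /andP[hw /existsP[z /andP[hwz ezy]]]; exists z; rewrite ezy andbT IH.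
by apply/existsP; exists w; rewrite hw hwz.
Qed.

Lemma reach1 x y : reach 1 x y = e x y.
Proof.
apply/existsP/idP => [[z /andP[/eqP-> //]]|h]; by exists x; rewrite eqxx.
Qed.

Lemma reachSl k x y : reach k.+1 x y = [exists z, e x z && reach k z y].
Proof.
have -> : reach k.+1 x y = reach (1 + k) x y by [].
by rewrite reach_add; apply: eq_existsb => z; rewrite reach1.
Qed.

Lemma reach_sym k x y : reach k x y = reach k y x.
Proof.
elim: k x y => [|k IH] x y; first by rewrite /= eq_sym.
rewrite reachSl /=; apply: eq_existsb => z; by rewrite IH e_sym andbC.
Qed.

Lemma reach3 a b c x y z w : reach a x y -> reach b y z -> reach c z w ->
  reach (a + b + c) x w.
Proof.
move=> h1 h2 h3; rewrite reach_add; apply/existsP; exists z; rewrite h3 andbT.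
by rewrite reach_add; apply/existsP; exists y; rewrite h1 h2.
Qed.

Lemma path_reach p x : path e x p -> reach (size p) x (last x p).
Proof.
elim: p x => [|z p IH] x; first by rewrite /= eqxx.
case/andP=> exz hp; change (reach (size p).+1 x (last z p)); rewrite reachSl; apply/existsP; exists z.
by rewrite exz IH.
Qed.

Hypothesis e_conn : forall x y : T, connect e x y.

Lemma reach_ex x y : exists k, reach k x y.
Proof.
case/connectP: (e_conn x y) => p hp ->; exists (size p); exact: path_reach.
Qed.

Definition kk x y : nat := xchoose (reach_ex x y).
Lemma kkP x y : reach (kk x y) x y.
Proof. exact: (xchooseP (reach_ex x y)). Qed.

Definition N0 : nat := \max_(p : T * T) kk p.1 p.2.
Lemma kk_le x y : (kk x y <= N0)%N.
Proof. exact: (leq_bigmax (F := fun p : T * T => kk p.1 p.2) (x, y)). Qed.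

Lemma nbr_ex x y : x != y -> exists z, e x z.
Proof.
move=> nxy; have := kkP x y; case: (kk x y) => [|k]; first by move=> /= hxy; rewrite hxy in nxy.
by rewrite reachSl => /existsP[z /andP[h _]]; exists z.
Qed.

Hypothesis has_nbr : forall x, exists z, e x z.

Lemma reach_SS k x y : reach k x y -> reach k.+2 x y.
Proof.
move=> h; have [z eyz] := has_nbr y.
apply/existsP; exists z; rewrite [e z y]e_sym eyz andbT.
by apply/existsP; exists y; apply/andP.
Qed.

Lemma climb n K x y : reach n x y -> (n <= K)%N -> odd n = odd K -> reach K x y.
Proof.
move=> h nK hodd.
have ev : odd (K - n) = false by rewrite oddB // hodd addbb.
have hK : K = (n + (K - n)./2 + (K - n)./2)%N.
  have := odd_double_half (K - n); rewrite ev -addnn; lia.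
rewrite hK; elim: ((K - n)./2) => [|i IH]; first by rewrite !addn0.
by rewrite !addnS -addSn; apply: reach_SS.
Qed.

Definition oddw := exists z k, odd k && reach k z z.

Lemma odd_pos : oddw -> exists K, forall x y, reach K x y.
Proof.
case=> z [L /andP[oL hL]]; exists (2 * N0 + L)%N => x y.
have h1 := reach3 (kkP x z) hL (kkP z y).
have h0 : reach (kk x z + kk z y) x y.
  by rewrite reach_add; apply/existsP; exists z; rewrite !kkP.
have l1 := kk_le x z; have l2 := kk_le z y.
case hp: (odd (kk x z + kk z y) == odd (2 * N0 + L)).
  by apply: (climb h0) => //; [lia | apply/eqP].
apply: (climb h1); first lia.
move: hp; rewrite !oddD oL; by do 3 case: odd.
Qed.

Variable u : T.
Definition side x := odd (kk u x).

Lemma reach_par : ~ oddw -> forall k x y, reach k x y -> odd k = side x (+) side y.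
Proof.
move=> no k x y h.
have h1 : reach (kk u x + k + kk u y) u u.
  by apply: (reach3 (kkP u x) h); rewrite reach_sym kkP.
have : odd (kk u x + k + kk u y) = false.
  by apply/negP => ho; apply: no; exists u, (kk u x + k + kk u y)%N; rewrite ho h1.
rewrite /side !oddD; by do 3 case: odd.
Qed.

Lemma side_edge : ~ oddw -> forall x y, e x y -> side y = ~~ side x.
Proof.
move=> no x y h; have := reach_par no (k := 1) (x := x) (y := y); rewrite reach1 => /(_ h).
by case: side; case: side.
Qed.

Lemma bip_pos : forall x y, side x = side y -> reach (2 * N0) x y.
Proof.
move=> x y hs.
have h0 : reach (kk u x + kk u y) x y.
  by rewrite reach_add; apply/existsP; exists u; rewrite reach_sym !kkP.
apply: (climb h0); first by have := kk_le u x; have := kk_le u y; lia.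
by rewrite oddD -/(side x) -/(side y) hs addbb oddM.
Qed.

End Reach.

Section Pos.
Variables (R : realType) (T : finType) (e : rel T).
Hypothesis e_sym : symmetric e.
Hypothesis e_irr : irreflexive e.
Hypothesis hdeg : forall x, deg e x != 0%N.

Lemma step_diag (g : R) x : step_prob e g x x = g.
Proof. by rewrite /step_prob eqxx (negPf (hdeg x)). Qed.

Lemma step_edge (g : R) x y : e x y -> step_prob e g x y = (1 - g) / (deg e x)%:R.
Proof.
move=> exy; rewrite /step_prob exy; case: eqP => // xy.
by move: exy; rewrite xy e_irr.
Qed.

Lemma sum_ge_term (F : T -> R) z : (forall x, 0 <= F x) -> F z <= \sum_x F x.
Proof.
move=> h; rewrite (bigD1 z) //= lerDl; exact: sumr_ge0.
Qed.

Lemma wd_pos (g : R) w k y : 0 <= g -> g < 1 -> reach e k w y ->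
  0 < walk_dist e g w k y.
Proof.
move=> g0 g1; elim: k y => [|k IH] y /=; first by move=> /eqP->; rewrite eqxx ltr01.
case/existsP => z /andP[hz ezy].
apply: (lt_le_trans (y := walk_dist e g w k z * step_prob e g z y)).
  rewrite mulr_gt0 ?IH // step_edge // divr_gt0 ?subr_gt0 //.
  by rewrite ltr0n lt0n hdeg.
apply: (sum_ge_term (F := fun x => walk_dist e g w k x * step_prob e g x y)).
by move=> x; rewrite mulr_ge0 ?wd_ge0 ?step_ge0 // ?ltW.
Qed.

Lemma wd_lazy (g : R) w k y : 0 < g -> g <= 1 -> 0 < walk_dist e g w k y ->
  0 < walk_dist e g w k.+1 y.
Proof.
move=> g0 g1 h /=.
apply: (lt_le_trans (y := walk_dist e g w k y * step_prob e g y y)).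
  by rewrite step_diag mulr_gt0.
apply: (sum_ge_term (F := fun x => walk_dist e g w k x * step_prob e g x y)).
by move=> x; rewrite mulr_ge0 ?wd_ge0 ?step_ge0 // ?ltW.
Qed.

Lemma wd_lazy_le (g : R) w j k y : 0 < g -> g <= 1 -> (j <= k)%N ->
  0 < walk_dist e g w j y -> 0 < walk_dist e g w k y.
Proof.
move=> g0 g1 /subnK <-; elim: (k - j)%N => [|i IH] h; rewrite ?add0n //.
by rewrite addSn; apply: wd_lazy => //; apply: IH.
Qed.

Lemma wd_supp w k y : ~~ reach e k w y -> walk_dist e (0 : R) w k y = 0.
Proof.
elim: k y => [|k IH] y /=; first by rewrite eq_sym => /negPf ->.
move=> hn; apply: big1 => z _.
case hz: (reach e k w z); last by rewrite IH ?hz // mul0r.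
case: (eqVneq z y) => [->|nzy]; first by rewrite step_diag mulr0.
case ezy: (e z y).
  by move: hn => /existsP; case; exists z; rewrite hz ezy.
by rewrite /step_prob (negPf nzy) ezy mulr0.
Qed.

Definition degR x : R := (deg e x)%:R.

Lemma sum_if_edge (c : R) y : \sum_x (if e x y then c else 0) = c * degR y.
Proof.
rewrite -big_mkcond /= sumr_const /degR /deg /nbrs -[c *+ _]mulr_natr. congr (_ * _%:R).
by apply: eq_card => x; rewrite inE e_sym.
Qed.

Lemma sum_step (g : R) (F : T -> R) y :
  \sum_x F x * step_prob e g x y =
  F y * g + \sum_x (if e x y then F x * ((1 - g) / degR x) else 0).
Proof.
rewrite (bigD1 y) //= step_diag [in RHS](bigD1 y) //= e_irr add0r; congr (_ + _).
apply: eq_bigr => x nxy; case exy: (e x y); first by rewrite step_edge.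
by rewrite /step_prob (negPf nxy) exy mulr0.
Qed.

Definition Mdeg : R := \sum_x degR x.
Definition spi x : R := degR x / Mdeg.

Variable t0 : T.

Lemma degR_ge1 x : 1 <= degR x.
Proof. by rewrite /degR ler1n lt0n hdeg. Qed.

Lemma Mdeg_gt0 : 0 < Mdeg.
Proof.
apply: (lt_le_trans _ (sum_ge_term (F := degR) t0 _)).
  exact: lt_le_trans ltr01 (degR_ge1 t0).
by move=> x; apply: ler0n.
Qed.

Lemma pi_sum : \sum_x spi x = 1.
Proof. by rewrite -mulr_suml divff // gt_eqF // Mdeg_gt0. Qed.

Lemma spi_ge0 x : 0 <= spi x.
Proof. by rewrite divr_ge0 ?ler0n // ltW // Mdeg_gt0. Qed.

Lemma spi_ge x : Mdeg^-1 <= spi x.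
Proof.
rewrite /spi -[X in X <= _]mul1r ler_wpM2r ?degR_ge1 // invr_ge0 ltW //; exact: Mdeg_gt0.
Qed.

Lemma pi_evolve (g : R) y : \sum_x spi x * step_prob e g x y = spi y.
Proof.
rewrite sum_step.
rewrite (eq_bigr (fun x => if e x y then (1 - g) / Mdeg else 0)); last first.
  move=> x _; case: ifP => // _; rewrite /spi; field.
  by rewrite gt_eqF ?Mdeg_gt0 // pnatr_eq0 hdeg.
rewrite sum_if_edge /spi; ring.
Qed.

Lemma pi_evolve_seq (g : R) : evolve e g (fun _ => spi).
Proof. by move=> k y; rewrite pi_evolve. Qed.

Variable side : T -> bool.
Hypothesis hside : forall x y, e x y -> side y = ~~ side x.

Definition mb (c : bool) (k : nat) (x : T) : R :=
  if side x == (c (+) odd k) then 2 * spi x else 0.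

Lemma mb_evolve c : evolve e 0 (mb c).
Proof.
move=> k y; rewrite sum_step mulr0 add0r subr0.
case hb: (side y == c (+) odd k.+1).
  rewrite (eq_bigr (fun x => if e x y then 2 / Mdeg else 0)); last first.
    move=> x _; case exy: (e x y) => //.
    have sx : side x = ~~ side y by rewrite (hside (x := y) (y := x)) ?negbK // e_sym.
    rewrite /mb sx; move: hb; rewrite oddS => hb.
    have -> : (~~ side y == c (+) odd k) = true.
      by case: (side y) hb; case: c; case: (odd k).
    rewrite /spi; field.
    by rewrite gt_eqF ?Mdeg_gt0 // /degR pnatr_eq0 hdeg.
  by rewrite sum_if_edge /mb hb /spi; ring.
rewrite /mb hb big1 // => x _; case exy: (e x y) => //.
have sx : side x = ~~ side y by rewrite (hside (x := y) (y := x)) ?negbK // e_sym.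
rewrite sx; move: hb; rewrite oddS.
by case: (side y); case: c; case: (odd k) => //= _; rewrite mul0r.
Qed.

Lemma side_sym b : \sum_x (if side x == b then degR x else 0) =
                   \sum_x (if side x == ~~ b then degR x else 0).
Proof.
have E z : degR z = \sum_y (if e y z then 1 else 0) by rewrite sum_if_edge mul1r.
transitivity (\sum_x \sum_y (if (side y == ~~ b) && e y x then 1 else 0 : R)).
  apply: eq_bigr => x _; case: ifP => hx.
    rewrite E; apply: eq_bigr => y _; case eyx: (e y x); rewrite ?andbF ?andbT //.
    by have := hside eyx; rewrite (eqP hx) => ->; rewrite negbK eqxx.
  apply/esym/big1 => y _; case eyx: (e y x); rewrite ?andbF ?andbT //.
  by case: eqP => // hy; move: (hside eyx) hx; rewrite hy negbK => ->; rewrite eqxx.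
rewrite exchange_big /=; apply: eq_bigr => y _; case: ifP => hy.
  rewrite E; apply: eq_bigr => x _; by rewrite e_sym.
by apply: big1 => x _.
Qed.

Lemma side_half b : \sum_x (if side x == b then degR x else 0) = Mdeg / 2.
Proof.
have H : \sum_x (if side x == b then degR x else 0) +
         \sum_x (if side x == ~~ b then degR x else 0) = Mdeg.
  rewrite -big_split /=; apply: eq_bigr => x _.
  by case: (side x); case: b; rewrite /= ?addr0 ?add0r.
by rewrite -H -side_sym; field.
Qed.

Lemma mb_sum c k : \sum_x mb c k x = 1.
Proof.
rewrite /mb.
rewrite (eq_bigr (fun x => 2 / Mdeg * (if side x == c (+) odd k then degR x else 0))).
  rewrite -mulr_sumr side_half; field; by rewrite gt_eqF ?Mdeg_gt0.
move=> x _; case: ifP; rewrite ?mulr0 // /spi => _; ring.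
Qed.

Lemma mb_ge0 c k x : 0 <= mb c k x.
Proof. by rewrite /mb; case: ifP => // _; rewrite mulr_ge0 ?spi_ge0. Qed.

End Pos.

Section Minor.
Variables (R : realType) (T : finType).

Lemma min_pos (F : T -> T -> R) (Pr : T -> T -> bool) :
  (forall x y, Pr x y -> 0 < F x y) ->
  exists d, [/\ 0 < d, d <= 1 & forall x y, Pr x y -> d <= F x y].
Proof.
move=> hF.
exists (\big[Order.min/1]_(p : T * T | Pr p.1 p.2) F p.1 p.2); split.
- elim/big_ind: _ => //; first by move=> a b ha hb; rewrite lt_min ha hb.
  by move=> p /hF.
- exact: bigmin_le_id.
- move=> x y hxy; exact: (@bigmin_le_cond _ _ _ 1 (x, y) (fun p : T * T => Pr p.1 p.2) (fun p : T * T => F p.1 p.2) hxy).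
Qed.

Lemma minorize (Q : T -> T -> R) (S : pred T) (d : R) (t0 : T) :
  0 <= d -> (forall x y, 0 <= Q x y) ->
  (forall x y, S x -> S y -> d <= Q x y) ->
  exists h : T -> R, \sum_y h y = 1 /\ forall x y, S x -> d * h y <= Q x y.
Proof.
move=> d0 hQ hS; case: (pickP S) => [x0 Sx0|S0]; last first.
  exists (fun y => (y == t0)%:R); split; last by move=> x y; rewrite S0.
  rewrite (bigD1 t0) //= eqxx big1 ?addr0 // => y /negPf -> //.
have cS : (0 < #|S|)%N by apply/card_gt0P; exists x0.
exists (fun y => (S y)%:R / #|S|%:R); split.
  rewrite -mulr_suml (eq_bigr (fun y => if S y then 1 else 0)); last by move=> y _; case: (S y).
  by rewrite -big_mkcond /= sumr_const divff // pnatr_eq0 -lt0n.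
move=> x y Sx; case Sy: (S y); last by rewrite mul0r mulr0 hQ.
apply: (le_trans _ (hS _ _ Sx Sy)); rewrite mul1r ler_pdivrMr ?ltr0n //.
by rewrite ler_peMr // ler1n.
Qed.

End Minor.

Section Wass.
Variables (R : realType) (T : finType) (e : rel T).
Hypothesis e_sym : symmetric e.
Hypothesis e_irr : irreflexive e.

Lemma gdist_self a : gdist e a a = 0%N.
Proof.
rewrite /gdist; have : (0 < #|T|)%N by apply/card_gt0P; exists a.
by case: #|T| => // n _ /=; rewrite inE eqxx.
Qed.

Lemma gdist_ge1 a b : a != b -> (1 <= gdist e a b)%N.
Proof.
move=> nab; rewrite /gdist; have : (0 < #|T|)%N by apply/card_gt0P; exists a.
case: #|T| => // n _ /=; rewrite inE eq_sym (negPf nab) //.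
Qed.

Lemma gdist_le a b : (gdist e a b <= #|T|)%N.
Proof. by rewrite /gdist; apply: (leq_trans (find_size _ _)); rewrite size_iota. Qed.

Lemma gdist_edge a b : e a b -> (gdist e a b <= 1)%N.
Proof.
move=> eab; have nab : a != b by apply/eqP => h; move: eab; rewrite h e_irr.
rewrite /gdist; have : (1 < #|T|)%N by apply/card_gt1P; exists a, b.
case: #|T| => [|[|n]] // _ /=; case: ifP => // _.
suff -> : b \in Defs.ball e 1 a by [].
rewrite /= inE; apply/orP; right; apply/bigcupP; exists a; rewrite ?inE //.
Qed.

Definition DT : R := #|T|%:R.

Lemma gdist_leR a b : (gdist e a b)%:R <= DT.
Proof. by rewrite /DT ler_nat gdist_le. Qed.

Lemma cost_ge0 (mu nu : T -> R) p : is_plan mu nu p -> 0 <= plan_cost e p.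
Proof.
case=> h0 _ _; apply: sumr_ge0 => a _; apply: sumr_ge0 => b _.
by rewrite mulr_ge0 ?ler0n.
Qed.

Lemma W_le (mu nu : T -> R) p : is_plan mu nu p -> wasserstein e mu nu <= plan_cost e p.
Proof.
move=> hp; rewrite /wasserstein; apply: ge_inf; last by exists p.
by exists 0 => c [p' [hp' ->]]; apply: cost_ge0 hp'.
Qed.

Lemma W_ge (mu nu : T -> R) p0 L : is_plan mu nu p0 ->
  (forall p, is_plan mu nu p -> L <= plan_cost e p) -> L <= wasserstein e mu nu.
Proof.
move=> hp0 hL; rewrite /wasserstein; apply: lb_le_inf.
  by exists (plan_cost e p0), p0.
by move=> c [p [hp ->]]; apply: hL.
Qed.

Lemma W_ge0 (mu nu : T -> R) p0 : is_plan mu nu p0 -> 0 <= wasserstein e mu nu.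
Proof. move=> hp0; apply: (W_ge hp0) => p; exact: cost_ge0. Qed.

Lemma W_perturb (mu nu m n : T -> R) (q : T -> T -> R) (eps : R) :
  0 < eps -> eps <= 1 -> is_plan m n q ->
  \sum_x mu x = 1 -> \sum_x nu x = 1 -> \sum_x m x = 1 -> \sum_x n x = 1 ->
  (forall x, (1 - eps) * m x <= mu x) -> (forall x, (1 - eps) * n x <= nu x) ->
  wasserstein e mu nu <= plan_cost e q + DT * eps.
Proof.
move=> e0 e1 [q0 qr qc] smu snu sm sn hmu hnu.
pose r x := mu x - (1 - eps) * m x.
pose s x := nu x - (1 - eps) * n x.
have r0 x : 0 <= r x by rewrite subr_ge0.
have s0 x : 0 <= s x by rewrite subr_ge0.
have sr : \sum_x r x = eps by rewrite sumrB smu -mulr_sumr sm; ring.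
have ss : \sum_x s x = eps by rewrite sumrB snu -mulr_sumr sn; ring.
have ne : eps != 0 by rewrite gt_eqF.
pose p a b := (1 - eps) * q a b + r a * s b / eps.
have hp : is_plan mu nu p.
  split.
  - move=> a b; apply: addr_ge0; first by rewrite mulr_ge0 // subr_ge0.
    by rewrite divr_ge0 ?mulr_ge0 // ltW.
  - move=> a; rewrite big_split /= -mulr_sumr qr -mulr_suml -mulr_sumr ss /r.
    by field.
  - move=> b; rewrite big_split /= -mulr_sumr qc -!mulr_suml sr /s.
    by field.
apply: (le_trans (W_le hp)); rewrite /plan_cost.
apply: (le_trans (y := \sum_a \sum_b ((gdist e a b)%:R * q a b + DT * (r a * s b / eps)))).
  apply: ler_sum => a _; apply: ler_sum => b _; rewrite /p mulrDr lerD //.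
    rewrite mulrCA ler_piMl ?mulr_ge0 ?ler0n //.
    lra.
  apply: ler_wpM2r; last exact: gdist_leR.
  by rewrite divr_ge0 ?mulr_ge0 // ltW.
rewrite (eq_bigr (fun a => \sum_b (gdist e a b)%:R * q a b + DT * r a)); last first.
  move=> a _; rewrite big_split /=; congr (_ + _).
  by rewrite -mulr_sumr -mulr_suml -mulr_sumr ss; field.
by rewrite big_split /= -mulr_sumr sr.
Qed.

Lemma W_lower (mu nu : T -> R) (S : pred T) p0 :
  is_plan mu nu p0 -> (forall a, ~~ S a -> mu a = 0) ->
  \sum_(b | ~~ S b) nu b <= wasserstein e mu nu.
Proof.
move=> hp0 hS; apply: (W_ge hp0) => p [pge hr hc].
have pbb b : ~~ S b -> p b b = 0.
  move=> nb; apply/le_anti; rewrite pge andbT -(hS _ nb) -(hr b).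
  exact: (sum_ge_term (F := p b)).
rewrite /plan_cost exchange_big /=.
apply: (le_trans (y := \sum_(b | ~~ S b) \sum_a (gdist e a b)%:R * p a b)).
  apply: ler_sum => b nb; rewrite -hc; apply: ler_sum => a _.
  case: (eqVneq a b) => [->|nab]; first by rewrite pbb ?mulr0.
  by rewrite ler_peMl // ler1n gdist_ge1.
rewrite [X in _ <= X](bigID (fun b => ~~ S b)) /= lerDl.
by apply: sumr_ge0 => b _; apply: sumr_ge0 => a _; rewrite mulr_ge0 ?ler0n.
Qed.

Lemma plan_diag (m : T -> R) : (forall x, 0 <= m x) ->
  is_plan m m (fun a b => if a == b then m a else 0) /\
  plan_cost e (fun a b => if a == b then m a else 0) = 0.
Proof.
move=> m0; split; first split.
- by move=> a b; case: ifP.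
- move=> a; rewrite (bigD1 a) //= eqxx big1 ?addr0 // => b /negPf.
  by rewrite eq_sym => ->.
- move=> b; rewrite (bigD1 b) //= eqxx big1 ?addr0 // => a /negPf -> //.
- rewrite /plan_cost big1 // => a _; apply: big1 => b _.
  by case: eqP => [->|_]; rewrite ?gdist_self ?mul0r ?mulr0.
Qed.

End Wass.

Section Plans.
Variables (R : realType) (T : finType) (e : rel T).
Hypothesis e_sym : symmetric e.
Hypothesis e_irr : irreflexive e.
Hypothesis hdeg : forall x, deg e x != 0%N.
Variable t0 : T.
Variable side : T -> bool.
Hypothesis hside : forall x y, e x y -> side y = ~~ side x.

Local Notation piR := (spi R e).
Local Notation M := (Mdeg R e).
Local Notation dR := (degR R e).

Definition mS (s : bool) (x : T) : R := if side x == s then 2 * piR x else 0.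

Lemma M_neq0 : M != 0.
Proof. by rewrite gt_eqF // (Mdeg_gt0 R hdeg t0). Qed.

Lemma mS_sum s : \sum_x mS s x = 1.
Proof. have := mb_sum R e_sym hdeg t0 hside s 0; by rewrite /mb /= addbF. Qed.

Lemma mS_ge0 s x : 0 <= mS s x.
Proof. by rewrite /mS; case: ifP => // _; rewrite mulr_ge0 // (spi_ge0 R hdeg t0). Qed.

Lemma mS_low s x : mS s x = 0 \/ M^-1 <= mS s x.
Proof.
rewrite /mS; case: ifP => _; [right|by left].
apply: (le_trans (spi_ge R hdeg t0 x)); rewrite ler_peMl ?(spi_ge0 R hdeg t0) //.
by rewrite ler1n.
Qed.

Lemma side_nbr a b : e a b -> side a = ~~ side b.
Proof. by move=> eab; rewrite (hside (x := b) (y := a)) // e_sym. Qed.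

Lemma sum_Se_col s (c : R) b :
  \sum_a (if (side a == s) && e a b then c else 0) =
  if side b == ~~ s then c * dR b else 0.
Proof.
case: ifP => hb.
  rewrite -(sum_if_edge e_sym); apply: eq_bigr => a _.
  case eab: (e a b); rewrite ?andbF ?andbT //.
  by rewrite (side_nbr eab) (eqP hb) negbK eqxx.
apply: big1 => a _; case eab: (e a b); rewrite ?andbF ?andbT //.
rewrite (side_nbr eab); move: hb; by case: (side b); case: s.
Qed.

Lemma sum_Se_row s (c : R) a :
  \sum_b (if (side a == s) && e a b then c else 0) =
  if side a == s then c * dR a else 0.
Proof.
case: ifP => ha /=; last by apply: big1.
rewrite -(sum_if_edge e_sym); apply: eq_bigr => b _; by rewrite e_sym.
Qed.

Lemma sum_side_deg s : \sum_a (if side a == s then M^-1 * dR a else 0) = 2^-1.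
Proof.
rewrite (eq_bigr (fun a => M^-1 * (if side a == s then dR a else 0))); last first.
  by move=> a _; case: ifP; rewrite ?mulr0.
rewrite -mulr_sumr (side_half R e_sym hside); field; exact: M_neq0.
Qed.

Lemma sum_diag (X : T -> R) a : \sum_b (if a == b then X a else 0) = X a.
Proof.
rewrite (bigD1 a) //= eqxx big1 ?addr0 // => b /negPf; by rewrite eq_sym => ->.
Qed.

Lemma sum_diag' (X : T -> R) b : \sum_a (if a == b then X a else 0) = X b.
Proof.
rewrite (bigD1 b) //= eqxx big1 ?addr0 // => a /negPf -> //.
Qed.

Definition qh (s : bool) (a b : T) : R :=
  (if a == b then (if side a == s then piR a else 0) else 0) +
  (if (side a == s) && e a b then M^-1 else 0).

Lemma qh_plan s : is_plan (mS s) piR (qh s) /\ plan_cost e (qh s) <= 2^-1.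
Proof.
have p0 := spi_ge0 R hdeg t0.
have Mi0 : 0 <= M^-1 by rewrite invr_ge0 ltW // (Mdeg_gt0 R hdeg t0).
split; first split.
- move=> a b; rewrite /qh addr_ge0 //; do 2 case: ifP => //.
- move=> a; rewrite /qh big_split /= (sum_diag (fun a => if side a == s then piR a else 0)) sum_Se_row /mS.
  case: ifP => _; rewrite ?addr0 // /spi; field; exact: M_neq0.
- move=> b; rewrite /qh big_split /= (sum_diag' (fun a => if side a == s then piR a else 0)) sum_Se_col.
  case: (side b); case: s => /=; rewrite ?addr0 ?add0r //.
    by rewrite /spi mulrC.
  by rewrite /spi mulrC.
rewrite /plan_cost.
apply: (le_trans (y := \sum_a \sum_b (if (side a == s) && e a b then M^-1 else 0))).
  apply: ler_sum => a _; apply: ler_sum => b _; rewrite /qh.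
  case: (eqVneq a b) => [->|nab].
    by rewrite gdist_self // mul0r; case: ifP.
  rewrite add0r; case: ifP => [/andP[_ eab]|_]; last by rewrite mulr0.
  by rewrite ler_piMl // lern1 gdist_edge.
under eq_bigr => a _ do rewrite sum_Se_row.
by rewrite sum_side_deg.
Qed.

Definition q1 (s : bool) (a b : T) : R :=
  if (side a == s) && e a b then 2 / M else 0.

Lemma q1_plan s : is_plan (mS s) (mS (~~ s)) (q1 s) /\ plan_cost e (q1 s) <= 1.
Proof.
have Mi0 : 0 <= 2 / M by rewrite divr_ge0 // ltW // (Mdeg_gt0 R hdeg t0).
split; first split.
- by move=> a b; rewrite /q1; case: ifP.
- move=> a; rewrite /q1 sum_Se_row /mS; case: ifP => // _.
  by rewrite /spi mulrAC mulrA.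
- move=> b; rewrite /q1 sum_Se_col /mS; case: ifP => // _.
  by rewrite /spi mulrAC mulrA.
rewrite /plan_cost.
apply: (le_trans (y := \sum_a \sum_b q1 s a b)).
  apply: ler_sum => a _; apply: ler_sum => b _; rewrite /q1.
  case: ifP => [/andP[_ eab]|_]; last by rewrite mulr0.
  by rewrite ler_piMl // lern1 gdist_edge.
rewrite /q1; under eq_bigr => a _ do rewrite sum_Se_row.
rewrite (eq_bigr (fun a => 2 * (if side a == s then M^-1 * dR a else 0))); last first.
  by move=> a _; case: ifP; rewrite ?mulr0 // mulrA.
by rewrite -mulr_sumr sum_side_deg mulfV.
Qed.

End Plans.

Lemma cvg_bounds (R : realType) (w : nat -> R) (c D : R) : 0 <= D ->
  (forall eps, 0 < eps -> eps <= 1 -> exists N, forall k, (N <= k)%N ->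
      c - eps <= w k /\ w k <= c + D * eps) ->
  w @ \oo --> c.
Proof.
move=> D0 h; apply/cvgrPdist_le => r r0.
pose eps := Num.min (r / (D + 1)) 1.
have D1 : 0 < D + 1 by rewrite ltr_wpDl.
have e0 : 0 < eps by rewrite lt_min ltr01 andbT divr_gt0.
have e1 : eps <= 1 by rewrite ge_min lexx orbT.
have e2 : eps * (D + 1) <= r by rewrite -ler_pdivlMr // ge_min lexx.
have [N hN] := h eps e0 e1.
exists N => // k /= hk; have [l1 l2] := hN k hk.
rewrite ler_norml; apply/andP; split; nra.
Qed.

Section Main.
Variables (R : realType) (T : finType) (e : rel T).
Hypothesis e_sym : symmetric e.
Hypothesis e_irr : irreflexive e.
Hypothesis e_conn : forall x y : T, connect e x y.
Hypothesis hdeg : forall x, deg e x != 0%N.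
Variable u : T.

Local Notation piR := (spi R e).
Local Notation M := (Mdeg R e).

Lemma has_nbr x : exists z, e x z.
Proof.
have := hdeg x; rewrite /deg -lt0n => /card_gt0P[z]; rewrite inE => h.
by exists z.
Qed.

Definition convd (s m : nat -> T -> R) :=
  forall eps, 0 < eps -> exists N, forall k, (N <= k)%N ->
    \sum_x `|s k x - m k x| <= eps.

Lemma Mgt0 : 0 < M.
Proof. exact: (Mdeg_gt0 R hdeg u). Qed.

Lemma pw (a b eps : R) : 0 < eps -> (b = 0 \/ M^-1 <= b) -> 0 <= a ->
  `|a - b| <= eps / M -> (1 - eps) * b <= a.
Proof.
move=> e0 [->|hb] a0 h; first by rewrite mulr0.
have h1 : eps / M <= eps * b by rewrite ler_wpM2l // ltW.
have h2 : b - a <= `|a - b| by rewrite distrC ler_norm.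
nra.
Qed.

Lemma approx (s m : nat -> T -> R) : (forall k x, 0 <= s k x) ->
  (forall k x, m k x = 0 \/ M^-1 <= m k x) -> convd s m ->
  forall eps, 0 < eps -> exists N, forall k, (N <= k)%N ->
    forall x, (1 - eps) * m k x <= s k x.
Proof.
move=> s0 ml hc eps e0.
have [N hN] := hc (eps / M) (divr_gt0 e0 Mgt0).
exists N => k hk x; apply: pw => //.
apply: le_trans (hN k hk).
exact: (sum_ge_term (F := fun x => `|s k x - m k x|)).
Qed.

Lemma upper (mu nu m n : nat -> T -> R) (q : nat -> T -> T -> R) (c : R) :
  (forall k, is_plan (m k) (n k) (q k)) -> (forall k, plan_cost e (q k) <= c) ->
  (forall k, \sum_x mu k x = 1) -> (forall k, \sum_x nu k x = 1) ->
  (forall k, \sum_x m k x = 1) -> (forall k, \sum_x n k x = 1) ->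
  (forall k x, 0 <= mu k x) -> (forall k x, 0 <= nu k x) ->
  (forall k x, m k x = 0 \/ M^-1 <= m k x) ->
  (forall k x, n k x = 0 \/ M^-1 <= n k x) ->
  convd mu m -> convd nu n ->
  forall eps, 0 < eps -> eps <= 1 -> exists N, forall k, (N <= k)%N ->
    wasserstein e (mu k) (nu k) <= c + DT R T * eps.
Proof.
move=> hq hc smu snu sm sn mu0 nu0 ml nl cm cn eps e0 e1.
have [N1 h1] := approx mu0 ml cm e0.
have [N2 h2] := approx nu0 nl cn e0.
exists (maxn N1 N2) => k; rewrite geq_max => /andP[k1 k2].
apply: (le_trans (W_perturb e e0 e1 (hq k) (smu k) (snu k) (sm k) (sn k) (h1 k k1) (h2 k k2))).
by rewrite lerD2r.
Qed.

Lemma conv_pi (g : R) w : 0 <= g -> g < 1 -> (0 < g \/ oddw e) ->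
  convd (walk_dist e g w) (fun _ => piR).
Proof.
move=> g0 g1 hg.
have [K hK] : exists K, forall x y, 0 < walk_dist e g x K y.
  case: hg => [gp|ho].
    exists (N0 e_conn) => x y.
    apply: (wd_lazy_le hdeg (j := kk e_conn x y)) => //; first exact: ltW.
      exact: kk_le.
    by apply: (wd_pos e_irr hdeg) => //; apply: kkP.
  have [K hK] := odd_pos e_sym e_conn has_nbr ho.
  by exists K => x y; apply: (wd_pos e_irr hdeg).
have [d [d0 d1 hd]] := min_pos (F := fun x y => walk_dist e g x K y)
   (Pr := fun _ _ => true) (fun x y _ => hK x y).
move=> eps e0.
have g1' : g <= 1 by apply: ltW.
apply: (@conv_gen R T e e_irr g (walk_dist e g w) (fun _ => piR) K d (fun _ => predT)) => //.
- exact: (pi_evolve_seq e_sym e_irr hdeg u).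
- by move=> k /=; rewrite (wd_sum e_irr) (pi_sum R hdeg u).
- move=> k; apply: (@minorize R T _ _ d u) => //; first exact: ltW.
    by move=> x y; apply: wd_ge0.
  by move=> x y _ _; apply: hd.
Qed.

Local Notation side := (side e_conn u).

Lemma side_e : ~ oddw e -> forall x y, e x y -> side y = ~~ side x.
Proof. move=> no; exact: (side_edge e_sym e_conn u no). Qed.

Lemma conv_bip w : ~ oddw e ->
  convd (walk_dist e 0 w) (fun k => mS R e side (side w (+) odd k)).
Proof.
move=> no.
pose K := (2 * N0 e_conn)%N.
have hK x y : side x = side y -> 0 < walk_dist e (0 : R) x K y.
  move=> hs; apply: (wd_pos e_irr hdeg) => //. exact: (bip_pos e_sym has_nbr hs).
have [d [d0 d1 hd]] := min_pos (F := fun x y => walk_dist e (0 : R) x K y)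
   (Pr := fun x y => side x == side y) (fun x y h => hK x y (eqP h)).
move=> eps e0.
apply: (@conv_gen R T e e_irr 0 (walk_dist e 0 w) (fun k => mS R e side (side w (+) odd k)) K d (fun k x => side x == side w (+) odd k)) => //.
- exact: (mb_evolve R e_sym e_irr hdeg u (side_e no) (side w)).
- by move=> k /=; rewrite (wd_sum e_irr) (mS_sum R e_sym hdeg u (side_e no)).
- move=> k x hx; rewrite /mS (negPf hx) (wd_supp R hdeg) //.
  apply/negP => hr; move: hx; rewrite (reach_par e_sym e_conn u no hr).
  by case: (side w); case: (side x).
- move=> k; apply: (@minorize R T _ _ d u) => //; first exact: ltW.
    by move=> x y; apply: wd_ge0.
  move=> x y /eqP hx /eqP hy; apply: hd; by rewrite hx hy.
Qed.


Lemma supp_bip w k x : ~ oddw e -> ~~ (side x == side w (+) odd k) ->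
  walk_dist e (0 : R) w k x = 0.
Proof.
move=> no hx; rewrite (wd_supp R hdeg) //.
apply/negP => hr; move: hx; rewrite (reach_par e_sym e_conn u no hr).
by case: (side w); case: (side x).
Qed.

Lemma DT_ge0 : 0 <= DT R T.
Proof. exact: ler0n. Qed.

Lemma half_pi s : ~ oddw e -> \sum_(b | ~~ (side b == s)) piR b = 2^-1.
Proof.
move=> no; rewrite big_mkcond /=.
rewrite (eq_bigr (fun b => M^-1 * (if side b == ~~ s then degR R e b else 0))).
  rewrite -mulr_sumr (side_half R e_sym (side_e no)); field.
  by rewrite gt_eqF // Mgt0.
move=> b _; case: (side b); case: s; rewrite /spi /= ?mulr0 // mulrC; reflexivity.
Qed.

Variables (v : T) (alpha beta : R).
Hypotheses (h0a : 0 <= alpha) (hab : alpha <= beta) (hb1 : beta < 1).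

Local Notation mu := (walk_dist e alpha u).
Local Notation nu := (walk_dist e beta v).

Lemma hb0 : 0 <= beta. Proof. exact: le_trans h0a hab. Qed.
Lemma ha1 : alpha <= 1. Proof. exact: le_trans hab (ltW hb1). Qed.

Lemma prod_plan (f g : T -> R) : (forall x, 0 <= f x) -> (forall x, 0 <= g x) ->
  \sum_x f x = 1 -> \sum_x g x = 1 -> is_plan f g (fun a b => f a * g b).
Proof.
move=> f0 g0 sf sg; split.
- by move=> a b; rewrite mulr_ge0.
- by move=> a; rewrite -mulr_sumr sg mulr1.
- by move=> b; rewrite -mulr_suml sf mul1r.
Qed.

Lemma mu_plan k : is_plan (mu k) (nu k) (fun a b => mu k a * nu k b).
Proof.
apply: prod_plan; rewrite ?(wd_sum e_irr) // => x; apply: wd_ge0 => //.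
- exact: ha1.
- exact: hb0.
- exact: ltW.
Qed.

Lemma target0 (m : nat -> T -> R) : (forall k x, 0 <= m k x) ->
  (forall k, \sum_x m k x = 1) -> (forall k x, m k x = 0 \/ M^-1 <= m k x) ->
  convd mu m -> convd nu m -> Wk e u v alpha beta @ \oo --> 0.
Proof.
move=> m0 sm ml cm cn; apply: (cvg_bounds DT_ge0) => eps e0 e1.
pose q k a b := if a == b then m k a else 0.
have hq k : is_plan (m k) (m k) (q k) := (plan_diag e (m0 k)).1.
have hc k : plan_cost e (q k) <= 0 by rewrite (plan_diag e (m0 k)).2.
have [N hN] := upper hq hc (fun k => wd_sum e_irr alpha u k) (fun k => wd_sum e_irr beta v k) sm sm
  (fun k x => wd_ge0 e u k x h0a ha1) (fun k x => wd_ge0 e v k x hb0 (ltW hb1))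
  ml ml cm cn e0 e1.
exists N => k hk; split; last by rewrite hN.
apply: le_trans (W_ge0 e (mu_plan k)); rewrite sub0r oppr_le0 ltW //.
Qed.

Lemma pi_low (k : nat) x : (fun _ : nat => piR) k x = 0 \/ M^-1 <= (fun _ : nat => piR) k x.
Proof. by right; apply: (spi_ge R hdeg u). Qed.

Lemma nu0 k x : 0 <= nu k x.
Proof. exact: (wd_ge0 e v k x hb0 (ltW hb1)). Qed.
Lemma mu0 k x : 0 <= mu k x.
Proof. exact: (wd_ge0 e u k x h0a ha1). Qed.

Lemma target_half : alpha = 0 -> ~ oddw e -> 0 < beta ->
  Wk e u v alpha beta @ \oo --> (2^-1 : R).
Proof.
move=> a0 no bp; apply: (cvg_bounds DT_ge0) => eps e0 e1.
pose s k := side u (+) odd k.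
pose m k := mS R e side (s k).
pose q k := qh R e side (s k).
have hq k : is_plan (m k) piR (q k) := (qh_plan R e_sym e_irr hdeg u (side_e no) (s k)).1.
have hc k : plan_cost e (q k) <= 2^-1 := (qh_plan R e_sym e_irr hdeg u (side_e no) (s k)).2.
have cm : convd mu m by rewrite a0; exact: conv_bip no.
have cn : convd nu (fun _ => piR) := conv_pi v hb0 hb1 (or_introl bp).
have [N1 hN1] := upper (n := fun _ => piR) hq hc (fun k => wd_sum e_irr alpha u k) (fun k => wd_sum e_irr beta v k)
  (fun k => mS_sum R e_sym hdeg u (side_e no) (s k)) (fun k => pi_sum R hdeg u)
  mu0 nu0 (fun k x => mS_low R hdeg u side (s k) x) pi_low cm cn e0 e1.
have [N2 hN2] := approx nu0 pi_low cn e0.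
exists (maxn N1 N2) => k; rewrite geq_max => /andP[k1 k2]; split; last exact: hN1.
have supp a : ~~ (side a == s k) -> mu k a = 0 by rewrite a0; apply: supp_bip.
apply: le_trans (W_lower e (mu_plan k) supp).
apply: (le_trans (y := \sum_(b | ~~ (side b == s k)) (1 - eps) * piR b)).
  by rewrite -mulr_sumr half_pi //; lra.
by apply: ler_sum => b _; apply: hN2.
Qed.

Lemma target_one : alpha = 0 -> beta = 0 -> ~ oddw e -> side v = ~~ side u ->
  Wk e u v alpha beta @ \oo --> (1 : R).
Proof.
move=> a0 b0 no hv; apply: (cvg_bounds DT_ge0) => eps e0 e1.
pose s k := side u (+) odd k.
pose m k := mS R e side (s k).
pose n k := mS R e side (~~ s k).
pose q k := q1 R e side (s k).
have hq k : is_plan (m k) (n k) (q k) := (q1_plan R e_sym e_irr hdeg u (side_e no) (s k)).1.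
have hc k : plan_cost e (q k) <= 1 := (q1_plan R e_sym e_irr hdeg u (side_e no) (s k)).2.
have cm : convd mu m by rewrite a0; exact: conv_bip no.
have cn : convd nu n.
  rewrite b0 => eps' e'; have [N hN] := conv_bip v no e'.
  by exists N => k hk; have := hN k hk; rewrite hv addNb.
have [N1 hN1] := upper hq hc (fun k => wd_sum e_irr alpha u k) (fun k => wd_sum e_irr beta v k)
  (fun k => mS_sum R e_sym hdeg u (side_e no) (s k))
  (fun k => mS_sum R e_sym hdeg u (side_e no) (~~ s k))
  mu0 nu0 (fun k x => mS_low R hdeg u side (s k) x)
  (fun k x => mS_low R hdeg u side (~~ s k) x) cm cn e0 e1.
exists N1 => k k1; split; last exact: hN1.
have supp a : ~~ (side a == s k) -> mu k a = 0 by rewrite a0; apply: supp_bip.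
apply: le_trans (W_lower e (mu_plan k) supp).
have -> : \sum_(b | ~~ (side b == s k)) nu k b = 1.
  rewrite -(wd_sum e_irr beta v k) [RHS](bigID (fun b => ~~ (side b == s k))) /=.
  rewrite [X in _ = _ + X]big1 ?addr0 // => b; rewrite negbK => /eqP hb.
  rewrite b0; apply: supp_bip => //; rewrite hb hv /s.
  by case: (side u); case: (odd k).
by rewrite lerBlDr lerDl ltW.
Qed.

Lemma target0_bip : alpha = 0 -> beta = 0 -> ~ oddw e -> side v = side u ->
  Wk e u v alpha beta @ \oo --> (0 : R).
Proof.
move=> a0 b0 no hv.
pose m k := mS R e side (side u (+) odd k).
apply: (target0 (m := m)).
- by move=> k x; apply: (mS_ge0 R hdeg u).
- by move=> k; apply: (mS_sum R e_sym hdeg u (side_e no)).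
- by move=> k x; apply: (mS_low R hdeg u).
- by rewrite a0; exact: conv_bip no.
- by rewrite b0 /m -hv; exact: conv_bip no.
Qed.

End Main.


Unset Implicit Arguments.
Theorem corollary3p12 (R : realType) (T : finType) (e : rel T)
    (e_sym : symmetric e) (e_irr : irreflexive e)
    (e_conn : forall x y : T, connect e x y)
    (u v : T) (alpha beta : R)
    (h0a : 0 <= alpha) (hab : alpha <= beta) (hb1 : beta <= 1) :
  let C1 := (Wk e u v alpha beta @ \oo --> (1 : R)) /\ beta < 1 in
  let C2 := (Wk e u v alpha beta @ \oo --> (2^-1 : R)) /\ beta < 1 in
  let C3 := (Wk e u v alpha beta @ \oo --> (0 : R)) /\ beta < 1 in
  let C4 := beta = 1 in
  (C1 \/ C2 \/ C3 \/ C4) /\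
  ~ (C1 /\ C2) /\ ~ (C1 /\ C3) /\ ~ (C1 /\ C4) /\
  ~ (C2 /\ C3) /\ ~ (C2 /\ C4) /\ ~ (C3 /\ C4).
Proof.
move=> C1 C2 C3 C4.
have uniq (a b : R) : Wk e u v alpha beta @ \oo --> a ->
    Wk e u v alpha beta @ \oo --> b -> a = b.
  by move=> ha hb; exact: (cvg_unique _ ha hb).
split; last first.
  split; first by case=> [[h1 _] [h2 _]]; have := uniq _ _ h1 h2; lra.
  split; first by case=> [[h1 _] [h2 _]]; have := uniq _ _ h1 h2; lra.
  split; first by case=> [[_ h1] h2]; move: h1; rewrite h2 ltxx.
  split; first by case=> [[h1 _] [h2 _]]; have := uniq _ _ h1 h2; lra.
  split; first by case=> [[_ h1] h2]; move: h1; rewrite h2 ltxx.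
  by case=> [[_ h1] h2]; move: h1; rewrite h2 ltxx.
case: (eqVneq beta 1) => [b1|b1]; first by do 3 right.
have hb1' : beta < 1 by rewrite lt_neqAle b1 hb1.
have hb0 : 0 <= beta := le_trans h0a hab.
case: (pickP (fun x => x != u)) => [x0 hx0|hall]; last first.
  have hu z : z = u by apply/eqP; move: (hall z) => /= /negbFE.
  have one_pt (f : T -> R) x : \sum_y f y = 1 -> f x = 1.
    move=> hs; rewrite -hs (bigD1 x) //= big1 ?addr0 // => y.
    by rewrite (hu y) (hu x) eqxx.
  right; right; left; split => //.
  apply: (cvg_bounds (D := 0)) => // eps e0 e1 ; exists 0%N => k _.
  have sm := wd_sum e_irr alpha u k; have sn := wd_sum e_irr beta v k.
  have m0 x : 0 <= walk_dist e alpha u k x.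
    by apply: wd_ge0 => //; apply: le_trans hab hb1.
  have n0 x : 0 <= walk_dist e beta v k x by apply: wd_ge0.
  have E : walk_dist e beta v k = walk_dist e alpha u k.
    by apply/funext => x; rewrite (one_pt _ x sm) (one_pt _ x sn).
  split.
    apply: le_trans (W_ge0 e (prod_plan m0 n0 sm sn)); lra.
  rewrite mul0r addr0 /Wk E.
  have [hp hc] := plan_diag e m0.
  by rewrite -hc; apply: W_le hp.
have hdeg x : deg e x != 0%N.
  have [z hz] : exists z, e x z.
    case: (eqVneq x u) => [->|nxu]; last exact: (nbr_ex e_conn nxu).
    by apply: (nbr_ex e_conn (x := u) (y := x0)); rewrite eq_sym.
  by rewrite /deg -lt0n; apply/card_gt0P; exists z; rewrite inE.
have ha1 : alpha < 1 := le_lt_trans hab hb1'.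
have pi_case : (0 < alpha \/ oddw e) -> C3.
  move=> h; split => //.
  apply: (target0 e_irr hdeg h0a hab hb1' (m := fun _ => spi R e)).
  - by move=> k x; apply: (spi_ge0 R hdeg u).
  - by move=> k; apply: (pi_sum R hdeg u).
  - by move=> k x; right; apply: (spi_ge R hdeg u).
  - exact: (conv_pi e_sym e_irr e_conn hdeg u u h0a ha1 h).
  - apply: (conv_pi e_sym e_irr e_conn hdeg u v hb0 hb1').
    by case: h => [ap|ho]; [left; apply: lt_le_trans ap hab | right].
case: (pselect (oddw e)) => [ho|no]; first by right; right; left; apply: pi_case; right.
case: (ltrP 0 alpha) => [ap|a0']; first by right; right; left; apply: pi_case; left.
have a0 : alpha = 0 by apply/le_anti; rewrite a0' h0a.
case: (ltrP 0 beta) => [bp|b0'].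
  right; left; split => //.
  exact: (target_half e_sym e_irr e_conn hdeg u v h0a hab hb1' a0 no bp).
have b0 : beta = 0 by apply/le_anti; rewrite b0' hb0.
case: (eqVneq (side e_conn u v) (side e_conn u u)) => [hv|hv].
  right; right; left; split => //.
  exact: (target0_bip e_sym e_irr hdeg h0a hab hb1' a0 b0 no hv).
left; split => //.
apply: (target_one e_sym e_irr hdeg h0a hab hb1' a0 b0 no).
by move: hv; case: (side e_conn u v); case: (side e_conn u u).
Qed.
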